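(* Let $N\ge 4$ be an integer. Suppose $w\in C^2([0,\infty))$ satisfies $$-w''(t)+(N-2)w'(t)+(N-1)w(t)=\frac{N-1}{2}\,e^{-t}\,w(t)^2\qquad\text{for all }t\ge 0,$$ together with $w(0)=0$ and $\lim_{t\to+\infty}w(t)=0$. Then $w\equiv 0$.
   Context: This is the radial Dirichlet problem (after the substitutions $v=u'$, $w(t)=-v(e^{-t})$) for $\Delta^2u=S_2[u]$ in the unit ball of $\mathbb{R}^N$, where $S_2[u]$ is the sum of the $2\times2$ principal minors of the Hessian matrix of $u$; this is the case $k=2$, $\lambda=0$. *)

(* Defs.v *)
From Stdlib Require Import Reals.
From Coquelicot Require Import Coquelicot.
Open Scope R_scope.

(* g is the derivative of f on [0, +oo) in the sense of functions on the
   closed half-line: for every t >= 0, the difference quotient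
   (f (t+h) - f t)/h tends to g t as h -> 0 with h <> 0 and t + h >= 0
   (one-sided derivative at t = 0, two-sided for t > 0). *)
Definition deriv_on_nonneg (f g : R -> R) : Prop :=
  forall t : R, 0 <= t ->
    filterlim (fun h => (f (t + h) - f t) / h)
      (within (fun h => h <> 0 /\ 0 <= t + h) (locally 0))
      (locally (g t)).

Definition continuous_on_nonneg (f : R -> R) : Prop :=
  forall t : R, 0 <= t ->
    filterlim f (within (fun s => 0 <= s) (locally t)) (locally (f t)).

Definition C2_nonneg (f f1 f2 : R -> R) : Prop :=
  deriv_on_nonneg f f1 /\ deriv_on_nonneg f1 f2 /\ continuous_on_nonneg f2.

(* Main.v *)
Require Import Defs.
From Stdlib Require Import Reals Lra Lia Psatz.
From Coquelicot Require Import Coquelicot.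
Open Scope R_scope.

Lemma deriv_pos (f g : R -> R) t : deriv_on_nonneg f g -> 0 < t -> is_derive f t (g t).
Proof.
  intros H Ht. apply is_derive_Reals. intros eps Heps.
  specialize (H t (Rlt_le _ _ Ht)).
  destruct (H _ (locally_ball (g t) (mkposreal eps Heps))) as [d Hd].
  assert (Hm : 0 < Rmin d t) by (apply Rmin_pos; [apply cond_pos | lra]).
  exists (mkposreal _ Hm). intros h Hh0 Hh. simpl in Hh.
  assert (Hb : Rabs (h + - 0) < d).
  { replace (h + - 0) with h by ring. assert (Rmin d t <= d) by apply Rmin_l. lra. }
  assert (Hp : h <> 0 /\ 0 <= t + h).
  { split; auto. assert (Rmin d t <= t) by apply Rmin_r.
    apply Rabs_def2 in Hh. lra. }
  exact (Hd h Hb Hp).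
Qed.

Lemma small_at0 (f g : R -> R) : deriv_on_nonneg f g -> f 0 = 0 ->
  forall t0 eta, 0 < t0 -> 0 < eta -> exists s, 0 < s < t0 /\ Rabs (f s) < eta.
Proof.
  intros H H0 t0 eta Ht0 Heta.
  specialize (H 0 (Rle_refl 0)).
  destruct (H _ (locally_ball (g 0) (mkposreal 1 Rlt_0_1))) as [d Hd].
  set (K := Rabs (g 0) + 1).
  assert (HK : 0 < K) by (unfold K; pose proof (Rabs_pos (g 0)); lra).
  set (h := Rmin (d/2) (Rmin (t0/2) (eta / (2*K)))).
  assert (Hd0 := cond_pos d).
  assert (Hh1 : h <= d/2) by apply Rmin_l.
  assert (Hh2 : h <= t0/2) by (eapply Rle_trans; [apply Rmin_r|apply Rmin_l]).
  assert (Hh3 : h <= eta/(2*K)) by (eapply Rle_trans; [apply Rmin_r|apply Rmin_r]).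
  assert (Hhp : 0 < h).
  { unfold h. repeat apply Rmin_pos; try lra. apply Rdiv_lt_0_compat; lra. }
  exists h. split; [lra|].
  assert (Hb : Rabs (h + - 0) < d).
  { replace (h + - 0) with h by ring. rewrite Rabs_right; lra. }
  assert (Hp : h <> 0 /\ 0 <= 0 + h) by (split; lra).
  pose proof (Hd h Hb Hp) as Hq. simpl in Hq.
  change (Rabs ((f (0 + h) - f 0) / h + - g 0) < 1) in Hq.
  rewrite H0, Rplus_0_l in Hq.
  set (q := (f h - 0) / h) in Hq.
  assert (Hfq : f h = q * h) by (unfold q; field; lra).
  assert (Hq2 : Rabs q < K).
  { unfold K. pose proof (Rabs_triang (q + - g 0) (g 0)).
    replace (q + - g 0 + g 0) with q in H1 by ring. lra. }
  rewrite Hfq, Rabs_mult, (Rabs_right h) by lra.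
  assert (h * K <= eta / 2).
  { apply Rmult_le_compat_r with (r := K) in Hh3; [|lra].
    replace (eta / (2 * K) * K) with (eta/2) in Hh3 by (field; lra). lra. }
  pose proof (Rabs_pos q). nra.
Qed.

Lemma mvt_pos (f df : R -> R) a b : 0 < a -> a <= b ->
  (forall x, 0 < x -> is_derive f x (df x)) ->
  exists c, a <= c <= b /\ f b - f a = df c * (b - a).
Proof.
  intros Ha Hab Hd.
  destruct (MVT_gen f a b df) as [c [Hc Heq]].
  - intros x Hx. apply Hd. rewrite Rmin_left in Hx by lra. lra.
  - intros x Hx. rewrite Rmin_left in Hx by lra.
    apply continuity_pt_filterlim. apply (ex_derive_continuous (K := R_AbsRing) (V := R_NormedModule) f x).
    exists (df x). apply Hd. lra.
  - exists c. rewrite Rmin_left, Rmax_right in Hc by lra. split; auto.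
Qed.

Lemma incr (f df : R -> R) a b : 0 < a -> a <= b ->
  (forall x, 0 < x -> is_derive f x (df x)) -> (forall x, 0 < x -> 0 <= df x) ->
  f a <= f b.
Proof.
  intros Ha Hab Hd Hp. destruct (mvt_pos f df a b Ha Hab Hd) as [c [Hc Heq]].
  assert (0 <= df c * (b - a)) by (apply Rmult_le_pos; [apply Hp; lra | lra]). lra.
Qed.

Lemma decr (f df : R -> R) a b : 0 < a -> a <= b ->
  (forall x, 0 < x -> is_derive f x (df x)) -> (forall x, 0 < x -> df x <= 0) ->
  f b <= f a.
Proof.
  intros Ha Hab Hd Hp. destruct (mvt_pos f df a b Ha Hab Hd) as [c [Hc Heq]].
  assert (0 <= - df c * (b - a)) by (apply Rmult_le_pos; [assert (df c <= 0) by (apply Hp; lra); lra | lra]). lra.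
Qed.

Lemma key (n y p : R) : 4 <= n -> p ^ 2 = 2 * ((n - 2) * y ^ 2 - (n - 1) / 6 * y ^ 3) ->
  2 * y * p <= 2 * ((2 * n - 4) + (n - 1) / 3) * y ^ 2 * (1 + y ^ 2).
Proof.
  intros Hn Hp.
  set (a := 2 * n - 4). set (b := (n - 1) / 3).
  assert (Ha : 4 <= a) by (unfold a; lra). assert (Hb : 0 < b) by (unfold b; lra).
  set (Y := 2 * (a + b) * y ^ 2 * (1 + y ^ 2)).
  assert (HY : 0 <= Y).
  { unfold Y. apply Rmult_le_pos; [apply Rmult_le_pos; [lra| apply pow2_ge_0]|].
    pose proof (pow2_ge_0 y); lra. }
  destruct (Rle_dec (2 * y * p) 0) as [Hle|Hgt]; [lra|].
  apply Rnot_le_lt in Hgt.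
  assert (Hsq : (2 * y * p) ^ 2 = 4 * y ^ 4 * (a - b * y)).
  { replace ((2 * y * p) ^ 2) with (4 * y ^ 2 * p ^ 2) by ring. rewrite Hp. unfold a, b. field. }
  set (X := (a + b) * (1 + y ^ 2)).
  assert (H1 : a - b * y <= X).
  { unfold X. assert (- y <= 1 + y ^ 2) by nra. nra. }
  assert (HX1 : 1 <= X) by (unfold X; pose proof (pow2_ge_0 y); nra).
  assert (H2 : a - b * y <= X ^ 2) by nra.
  assert (HY2 : Y ^ 2 = 4 * y ^ 4 * X ^ 2) by (unfold Y, X; ring).
  assert (H3 : (2 * y * p) ^ 2 <= Y ^ 2).
  { rewrite Hsq, HY2. apply Rmult_le_compat_l; [|lra]. pose proof (pow2_ge_0 (y^2)).
    replace (y ^ 4) with ((y ^ 2) ^ 2) by ring. lra. }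
  destruct (Rle_dec (2 * y * p) Y) as [|Hc]; [auto|].
  apply Rnot_le_lt in Hc. exfalso. nra.
Qed.

Lemma exp_le1 x : 0 <= x -> exp (- x) <= 1.
Proof.
  intros [H|H]; [left; rewrite <- exp_0; apply exp_increasing; lra|].
  subst; rewrite Ropp_0, exp_0; lra.
Qed.

Ltac repl_der f t v H :=
  replace (Derive (fun x0 => f x0) t) with v by (symmetry; apply is_derive_unique; apply H).

Theorem theorem3p3 (N : nat) (w w1 w2 : R -> R) :
  (4 <= N)%nat ->
  C2_nonneg w w1 w2 ->
  (forall t : R, 0 <= t ->
     - w2 t + (INR N - 2) * w1 t + (INR N - 1) * w t
     = (INR N - 1) / 2 * exp (- t) * (w t) ^ 2) ->
  w 0 = 0 ->
  is_lim w p_infty 0 ->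
  forall t : R, 0 <= t -> w t = 0.
Proof.
  intros HN [Hw [Hw1 _]] Hode H0 Hlim t Ht.
  assert (Hn : 4 <= INR N) by (replace 4 with (INR 4) by (simpl; ring); apply le_INR; lia).
  set (n := INR N) in *.
  assert (Dw : forall s, 0 < s -> is_derive w s (w1 s)) by (intros; apply deriv_pos; auto).
  assert (Dw1 : forall s, 0 < s -> is_derive w1 s (w2 s)) by (intros; apply deriv_pos; auto).
  pose (z := fun s => exp (- s) * w s).
  pose (z1 := fun s => exp (- s) * (w1 s - w s)).
  assert (Hz : forall s, 0 < s -> is_derive z s (z1 s)).
  { intros s Hs. unfold z, z1. auto_derive.
    - exists (w1 s). apply Dw; auto.
    - repl_der w s (w1 s) (Dw s Hs). ring. }
  assert (Hz1 : forall s, 0 < s -> is_derive z1 s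
            ((n - 4) * z1 s + (2 * n - 4) * z s - (n - 1) / 2 * z s ^ 2)).
  { intros s Hs. unfold z, z1. auto_derive.
    - split; [exists (w2 s); apply Dw1; auto | split; auto; exists (w1 s); apply Dw; auto].
    - repl_der w s (w1 s) (Dw s Hs). repl_der w1 s (w2 s) (Dw1 s Hs).
      assert (Ho := Hode s (Rlt_le _ _ Hs)).
      replace (w2 s) with ((n - 2) * w1 s + (n - 1) * w s - (n - 1) / 2 * exp (- s) * w s ^ 2) by lra.
      ring. }
  assert (Hzw : forall s, 0 <= s -> Rabs (z s) <= Rabs (w s)).
  { intros s Hs. unfold z. rewrite Rabs_mult, Rabs_right by (apply Rle_ge, Rlt_le, exp_pos).
    assert (exp (- s) <= 1) by (apply exp_le1; auto).
    pose proof (Rabs_pos (w s)). nra. }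
assert (Hz0 : forall s, z s = 0 -> w s = 0).
  { intros s Hs. unfold z in Hs. pose proof (exp_pos (- s)).
    apply Rmult_integral in Hs. destruct Hs; auto; lra. }
  assert (Hsmall : forall t0 eta, 0 < t0 -> 0 < eta -> exists s, 0 < s < t0 /\ Rabs (z s) < eta).
  { intros t0 eta H1 H2. destruct (small_at0 w w1 Hw H0 t0 eta H1 H2) as [s [Hs1 Hs2]].
    exists s. split; auto. pose proof (Hzw s ltac:(lra)). lra. }
  assert (Hinf : forall eta, 0 < eta -> exists M, 0 < M /\ forall s, M <= s -> Rabs (z s) < eta).
  { intros eta He.
    assert (Hl : Rbar_locally (Finite 0) (fun y => Rabs y < eta)).
    { exists (mkposreal eta He). intros y Hy. change (Rabs (y + - 0) < eta) in Hy.
      rewrite Ropp_0, Rplus_0_r in Hy. exact Hy. }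
    destruct (Hlim _ Hl) as [M HM].
    exists (Rmax M 0 + 1). split.
    - pose proof (Rmax_r M 0). lra.
    - intros s Hs. pose proof (Rmax_r M 0). pose proof (Rmax_l M 0).
      pose proof (Hzw s ltac:(lra)). pose proof (HM s ltac:(lra)). simpl in *. lra. }
  clearbody z z1.
  pose (F := fun y => (n - 2) * y ^ 2 - (n - 1) / 6 * y ^ 3).
  assert (HF : forall d, 0 < d -> exists eta, 0 < eta /\ eta <= 1 /\
                 forall y, Rabs y < eta -> Rabs (F y) < d).
  { intros d Hd. exists (Rmin 1 (d / (2 * n))).
    assert (Hm1 : Rmin 1 (d / (2 * n)) <= 1) by apply Rmin_l.
    assert (Hm2 : Rmin 1 (d / (2 * n)) <= d / (2 * n)) by apply Rmin_r.
    assert (Hm0 : 0 < Rmin 1 (d / (2 * n))) by (apply Rmin_pos; [lra| apply Rdiv_lt_0_compat; lra]).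
    split; [auto|split; [auto|]].
    set (e := Rmin 1 (d / (2 * n))) in *.
    assert (He : e * n <= d / 2).
    { apply Rmult_le_compat_r with (r := n) in Hm2; [|lra].
      replace (d / (2 * n) * n) with (d / 2) in Hm2 by (field; lra). lra. }
    intros y Hy. apply Rabs_def2 in Hy. destruct Hy as [Hy1 Hy2].
    assert (Hy3 : y ^ 2 < e) by nra.
    assert (Hy4 : - y ^ 2 <= y ^ 3 <= y ^ 2) by (split; nra).
    assert (Hy5 : 0 <= y ^ 2) by nra.
    unfold F. apply Rabs_def1; nra. }
  pose (E := fun s => z1 s ^ 2 / 2 - F (z s)).
  assert (HE : forall s, 0 < s -> is_derive E s ((n - 4) * z1 s ^ 2)).
  { intros s Hs. unfold E, F. auto_derive.
    - split; [eexists; apply Hz1; auto | split; [eexists; apply Hz; auto| split; [eexists; apply Hz; auto | auto]]].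
    - repl_der z s (z1 s) (Hz s Hs).
      repl_der z1 s ((n - 4) * z1 s + (2 * n - 4) * z s - (n - 1) / 2 * z s ^ 2) (Hz1 s Hs). field. }
  assert (HEp : forall s, 0 < s -> 0 <= (n - 4) * z1 s ^ 2).
  { intros s _. apply Rmult_le_pos; [lra| apply pow2_ge_0]. }
  assert (HEpos : forall s, 0 < s -> 0 <= E s).
  { intros s Hs. apply Rnot_lt_le. intro Hlt.
    destruct (HF (- E s) ltac:(lra)) as [eta [He1 [He2 He3]]].
    destruct (Hsmall s eta Hs He1) as [r [Hr1 Hr2]].
    pose proof (incr E _ r s ltac:(lra) ltac:(lra) HE HEp).
    pose proof (He3 _ Hr2). apply Rabs_def2 in H1.
    unfold E in *. pose proof (pow2_ge_0 (z1 r)). lra. }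
assert (HEneg : forall s, 0 < s -> E s <= 0).
  { intros t1 Ht1. apply Rnot_lt_le. intro Hlt. set (d := E t1) in *.
    destruct (HF (d / 2) ltac:(lra)) as [eta [He1 [He2 He3]]].
    destruct (Hinf eta He1) as [M [HM1 HM2]].
    set (T := Rmax M t1). assert (HT1 : M <= T) by apply Rmax_l.
    assert (HT2 : t1 <= T) by apply Rmax_r.
    set (L := 4 / d + 1). assert (HL : 1 <= L) by (unfold L; assert (0 < 4 / d) by (apply Rdiv_lt_0_compat; lra); lra).
    assert (HdL : d * L = 4 + d) by (unfold L; field; lra).
    destruct (mvt_pos z z1 T (T + L) ltac:(lra) ltac:(lra) Hz) as [c [Hc Heq]].
    replace (T + L - T) with L in Heq by ring.
    pose proof (incr E _ t1 c ltac:(lra) ltac:(lra) HE HEp) as HEc.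
    pose proof (He3 _ (HM2 c ltac:(lra))) as HFc. apply Rabs_def2 in HFc.
    assert (Hz1c : d < z1 c ^ 2). { assert (E c = z1 c ^ 2 / 2 - F (z c)) by reflexivity. destruct HFc. assert (E t1 = d) by reflexivity. clearbody d. lra. }
    pose proof (HM2 T HT1) as Ha. pose proof (HM2 (T + L) ltac:(lra)) as Hb.
    apply Rabs_def2 in Ha. apply Rabs_def2 in Hb. destruct Ha, Hb.
    assert (HD : (z (T + L) - z T) ^ 2 < 4) by nra.
    rewrite Heq in HD.
    assert (L <= L ^ 2) by nra.
    assert (d * L <= z1 c ^ 2 * L ^ 2) by nra.
    replace ((z1 c * L) ^ 2) with (z1 c ^ 2 * L ^ 2) in HD by ring. lra. }
  assert (HE0 : forall s, 0 < s -> z1 s ^ 2 = 2 * ((n - 2) * z s ^ 2 - (n - 1) / 6 * z s ^ 3)).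
  { intros s Hs. pose proof (HEpos s Hs). pose proof (HEneg s Hs). unfold E, F in *. lra. }
  set (lam := 2 * ((2 * n - 4) + (n - 1) / 3)).
  assert (Hlam : 0 < lam) by (unfold lam; lra).
  pose (phi := fun s => z s ^ 2 / (1 + z s ^ 2) * exp (- (lam * s))).
  pose (dphi := fun s => exp (- (lam * s)) * (2 * z s * z1 s / (1 + z s ^ 2) ^ 2 - lam * z s ^ 2 / (1 + z s ^ 2))).
  assert (Hphi : forall s, 0 < s -> is_derive phi s (dphi s)).
  { intros s Hs. pose proof (pow2_ge_0 (z s)). unfold phi, dphi. auto_derive.
    - split; [eexists; apply Hz; auto | split; [eexists; apply Hz; auto| split; [nra | auto]]].
    - repl_der z s (z1 s) (Hz s Hs). field. nra. }
  assert (Hdphi : forall s, 0 < s -> dphi s <= 0).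
  { intros s Hs. unfold dphi. pose proof (exp_pos (- (lam * s))).
    pose proof (key n (z s) (z1 s) Hn (HE0 s Hs)) as Hk. fold lam in Hk.
    set (u := 1 + z s ^ 2). assert (Hu : 0 < u) by (unfold u; pose proof (pow2_ge_0 (z s)); lra).
    replace (2 * z s * z1 s / u ^ 2 - lam * z s ^ 2 / u) with
      (- ((lam * z s ^ 2 * u - 2 * z s * z1 s) * / u ^ 2)) by (field; lra).
    assert (0 <= (lam * z s ^ 2 * u - 2 * z s * z1 s) * / u ^ 2).
    { apply Rmult_le_pos; [unfold u in *; lra | apply Rlt_le, Rinv_0_lt_compat; nra]. }
    nra. }
  destruct Ht as [Ht|Ht]; [|subst; auto].
  apply Hz0. destruct (Req_dec (z t) 0) as [|Hne]; auto. exfalso.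
  assert (Hpos : 0 < phi t).
  { unfold phi. apply Rmult_lt_0_compat; [|apply exp_pos].
    assert (0 < z t ^ 2) by (apply pow2_gt_0; auto).
    apply Rdiv_lt_0_compat; lra. }
  set (d := phi t) in *.
  set (eta := Rmin 1 d).
  assert (He1 : eta <= 1) by apply Rmin_l. assert (He2 : eta <= d) by apply Rmin_r.
  assert (He0 : 0 < eta) by (apply Rmin_pos; lra).
  destruct (Hsmall t eta Ht He0) as [r [Hr1 Hr2]].
  pose proof (decr phi dphi r t ltac:(lra) ltac:(lra) Hphi Hdphi) as Hdec.
  assert (Hd : phi t = d) by reflexivity. clearbody d.
  assert (Hphir : phi r <= z r ^ 2).
  { unfold phi. pose proof (exp_le1 (lam * r) ltac:(nra)).
    pose proof (exp_pos (- (lam * r))). pose proof (pow2_ge_0 (z r)).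
    assert (z r ^ 2 / (1 + z r ^ 2) <= z r ^ 2).
    { apply Rmult_le_reg_r with (r := 1 + z r ^ 2); [lra|].
      replace (z r ^ 2 / (1 + z r ^ 2) * (1 + z r ^ 2)) with (z r ^ 2) by (field; lra). nra. }
    assert (0 <= z r ^ 2 / (1 + z r ^ 2)) by (apply Rdiv_le_0_compat; lra).
    nra. }
  apply Rabs_def2 in Hr2. destruct Hr2.
  assert (z r ^ 2 < d) by nra. lra.
Qed.
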